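(* Let $n\ge 2$ and let $Q\in\mathbb{R}^{n\times n}$ be an irreducible generator matrix of a continuous-time Markov chain ($q_{ij}\ge0$ for $i\ne j$, $q_{ii}=-\sum_{j\ne i}q_{ij}$). Let $\boldsymbol v$ be the positive eigenvector of $Q^\top$ for eigenvalue $0$ with $\boldsymbol 1_n^\top\boldsymbol v=1$, and let $L^*$ be the matrix with entries $L^*_{ii}=\sum_{j\ne i}q_{ji}\frac{v_j}{v_i}$ and $L^*_{ij}=-q_{ji}\frac{v_j}{v_i}$ for $i\ne j$. Let $B=\operatorname{diag}(\beta_i)$ with all $\beta_i>0$ and $D=\operatorname{diag}(\delta_i)$ with all $\delta_i\ge 0$ and at least one $\delta_i>0$. Let $A=(L^*+D)^{-1}B$ and define, for $\boldsymbol p\in\mathbb{R}^n$ with $\boldsymbol p\ge\boldsymbol 0$, \[ H(\boldsymbol p)=(I+A\operatorname{diag}(\boldsymbol p))^{-1}A\boldsymbol p . \] If $H$ has a fixed point $\boldsymbol p^*\gg\boldsymbol 0$, then it is the unique fixed point of $H$ with all entries strictly positive.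
   Context: For vectors, $\boldsymbol x\gg\boldsymbol y$ means $x_i>y_i$ for all $i$, and $\boldsymbol x\ge\boldsymbol y$ means $x_i\ge y_i$ for all $i$. *)

(* Defs.v *)
From mathcomp Require Import all_boot all_order all_algebra.
Set Implicit Arguments. Unset Strict Implicit. Unset Printing Implicit Defensive.
Import Order.TTheory GRing.Theory Num.Theory.
Local Open Scope ring_scope.

Section Defs.
Variables (R : realFieldType) (n : nat).

Definition generator_mx (Q : 'M[R]_n) : Prop :=
  (forall i j : 'I_n, i != j -> 0 <= Q i j) /\
  (forall i : 'I_n, Q i i = - \sum_(j < n | j != i) Q i j).

Definition irreducible_mx (Q : 'M[R]_n) : Prop :=
  forall i j : 'I_n, connect [rel a b | (a != b) && (0 < Q a b)] i j.

Definition Lstar (Q : 'M[R]_n) (v : 'cV[R]_n) : 'M[R]_n :=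
  \matrix_(i, j) if i == j then \sum_(k < n | k != i) Q k i * v k 0 / v i 0
                 else - (Q j i * v j 0 / v i 0).

Definition Hmap (A : 'M[R]_n) (p : 'cV[R]_n) : 'cV[R]_n :=
  invmx (1%:M + A *m diag_mx p^T) *m (A *m p).

Definition vpos (p : 'cV[R]_n) : Prop := forall i, 0 < p i 0.

End Defs.

(* Main.v *)
Require Import Defs.
From mathcomp Require Import all_boot all_order all_algebra.
From mathcomp Require Import ring lra.
Import Order.TTheory GRing.Theory Num.Theory.
Local Open Scope ring_scope.

Section Helpers.
Variables (R : realFieldType) (n : nat).

Lemma argmax_ex (f : 'I_n -> R) (i0 : 'I_n) : exists i, forall j, f j <= f i.
Proof.
by case: (@arg_maxP _ _ _ i0 predT f isT) => i _ H; exists i => j; apply: H.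
Qed.

Lemma kernel_max (K : 'M[R]_n) (x : 'cV[R]_n) i :
  (forall a b, a != b -> K a b <= 0) -> (forall j, x j 0 <= x i 0) ->
  (K *m x) i 0 = 0 -> 0 < x i 0 -> 0 <= \sum_j K i j ->
  \sum_j K i j = 0 /\ (forall j, j != i -> K i j < 0 -> x j 0 = x i 0).
Proof.
move=> Hoff Hmax Hk xi0 s0.
have E : (K *m x) i 0 = x i 0 * (\sum_j K i j) + \sum_j K i j * (x j 0 - x i 0).
  rewrite mxE mulr_sumr -big_split /=; apply: eq_bigr => j _; ring.
have T : forall j, 0 <= K i j * (x j 0 - x i 0).
  move=> j; case: (eqVneq j i) => [->|ji]; first by rewrite subrr mulr0.
  by apply: mulr_le0; [apply: Hoff; rewrite eq_sym | rewrite subr_le0].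
have S2 : 0 <= \sum_j K i j * (x j 0 - x i 0) by apply: sumr_ge0 => j _.
have P1 : 0 <= x i 0 * \sum_j K i j by apply: mulr_ge0 => //; apply: ltW.
have Z1 : x i 0 * \sum_j K i j = 0 by lra.
have Z2 : \sum_j K i j * (x j 0 - x i 0) = 0 by lra.
split.
  by move/eqP: Z1; rewrite mulf_eq0 (gt_eqF xi0) /= => /eqP.
move=> j ji Kneg.
have := @psumr_eq0P _ _ predT _ (fun j _ => T j) Z2 j isT.
move/eqP; rewrite mulf_eq0 (lt_eqF Kneg) /= subr_eq0 => /eqP //.
Qed.

Lemma unit_of_ker (K : 'M[R]_n) :
  (forall x : 'cV_n, K *m x = 0 -> forall i, (forall j, x j 0 <= x i 0) -> 0 < x i 0 -> False) ->
  K \in unitmx.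
Proof.
move=> H; rewrite unitmxE unitfE -det_tr; apply/negP => /det0P [w w0 wK].
set x := w^T.
have Kx : K *m x = 0 by rewrite /x -[K]trmxK -trmx_mul wK trmx0.
have [k xk] : exists k, x k 0 != 0.
  case: (pickP (fun k : 'I_n => x k 0 != 0)) => [k xk|none]; first by exists k.
  exfalso; move/eqP: w0; apply; apply/matrixP => a b.
  move/negbFE/eqP: (none b); rewrite /x !mxE ord1 => ->; by [].
move: xk; rewrite neq_lt => /orP [xneg|xpos].
- have Ky : K *m (- x) = 0 by rewrite mulmxN Kx oppr0.
  have [i Hi] := argmax_ex (fun j => (- x) j 0) k.
  apply: (H _ Ky i Hi); apply: lt_le_trans (Hi k); rewrite mxE; lra.
- have [i Hi] := argmax_ex (fun j => x j 0) k.
  apply: (H _ Kx i Hi); exact: lt_le_trans (Hi k).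
Qed.


Lemma Lstar_off (Q : 'M[R]_n) v a b : a != b ->
  Lstar Q v a b = - (Q b a * v b 0 / v a 0).
Proof. by move=> ab; rewrite mxE (negbTE ab). Qed.

Lemma Lstar_row (Q : 'M[R]_n) v i : \sum_j Lstar Q v i j = 0.
Proof.
rewrite (bigD1 i) //= mxE eqxx.
under eq_bigr => j ji do rewrite mxE eq_sym (negbTE ji).
by rewrite sumrN addrN.
Qed.

Lemma diag_row (d : 'rV[R]_n) i : \sum_j diag_mx d i j = d 0 i.
Proof.
rewrite (bigD1 i) //= big1 ?addr0; first by rewrite mxE eqxx mulr1n.
by move=> j ji; rewrite mxE eq_sym (negbTE ji) mulr0n.
Qed.

Definition Mmat (Q : 'M[R]_n) v (delta : 'rV[R]_n) := Lstar Q v + diag_mx delta.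

Lemma M_off Q v delta a b : generator_mx Q -> vpos v -> a != b ->
  Mmat Q v delta a b = - (Q b a * v b 0 / v a 0) /\ Mmat Q v delta a b <= 0.
Proof.
move=> [HQ _] Hv ab; rewrite /Mmat mxE Lstar_off // mxE (negbTE ab) mulr0n addr0.
split => //; rewrite oppr_le0; apply: mulr_ge0; last by rewrite invr_ge0 ltW.
by apply: mulr_ge0; [apply: HQ; rewrite eq_sym | apply: ltW].
Qed.

Lemma M_row Q v delta i : \sum_j Mmat Q v delta i j = delta 0 i.
Proof.
under eq_bigr => j _ do rewrite /Mmat mxE.
by rewrite big_split /= Lstar_row diag_row add0r.
Qed.


Lemma M_unit Q v (delta : 'rV[R]_n) : generator_mx Q -> irreducible_mx Q -> vpos v ->
  (forall i, 0 <= delta 0 i) ->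
  (exists i, 0 < delta 0 i) -> Mmat Q v delta \in unitmx.
Proof.
move=> HQ Hirr Hv Hd [k0 dk0]; apply: unit_of_ker => x Kx i Hi xi.
have Hoff : forall a b, a != b -> Mmat Q v delta a b <= 0.
  by move=> a b ab; case: (M_off _ _ delta _ _ HQ Hv ab).
have key : forall z, x z 0 = x i 0 -> delta 0 z = 0 /\
    (forall j, j != z -> Mmat Q v delta z j < 0 -> x j 0 = x i 0).
  move=> z xz; have Hz : forall j, x j 0 <= x z 0 by move=> j; rewrite xz.
  have k1 : (Mmat Q v delta *m x) z 0 = 0 by rewrite Kx mxE.
  have k2 : 0 < x z 0 by rewrite xz.
  have k3 : 0 <= \sum_j Mmat Q v delta z j by rewrite M_row.
  have [s0 H] := kernel_max _ _ _ Hoff Hz k1 k2 k3.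
  split; first by rewrite -(M_row Q v).
  by move=> j jz Mj; rewrite -xz; apply: H.
have cl : forall p y, path [rel a b | (a != b) && (0 < Q a b)] y p ->
    x (last y p) 0 = x i 0 -> x y 0 = x i 0.
  elim=> [|z p IH] y //= /andP [/andP [yz Qyz] Hp] Hl.
  have xz := IH z Hp Hl.
  apply: (proj2 (key z xz)) => //.
  have zy : z != y by rewrite eq_sym.
  have [-> _] := M_off _ _ delta _ _ HQ Hv zy.
  rewrite oppr_lt0; apply: mulr_gt0; last by rewrite invr_gt0.
  exact: mulr_gt0.
have [p Hp Hl] := connectP (Hirr k0 i).
have Hl' : x (last k0 p) 0 = x i 0 by rewrite -Hl.
have [dz _] := key k0 (cl p k0 Hp Hl').
by move: dk0; rewrite dz ltxx.
Qed.

Lemma MBP_unit Q v (delta beta : 'rV[R]_n) (p : 'cV[R]_n) :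
  generator_mx Q -> vpos v -> (forall i, 0 <= delta 0 i) ->
  (forall i, 0 < beta 0 i) -> vpos p ->
  (Mmat Q v delta + diag_mx beta *m diag_mx p^T) \in unitmx.
Proof.
move=> HQ Hv Hd Hb Hp; apply: unit_of_ker => x Kx i Hi xi.
set K := _ + _ in Kx.
have Kij : forall a j, K a j = Mmat Q v delta a j + beta 0 a * diag_mx p^T a j.
  by move=> a j; rewrite /K mul_diag_mx !mxE.
have Hoff : forall a b, a != b -> K a b <= 0.
  move=> a b ab; rewrite Kij [diag_mx _ _ _]mxE (negbTE ab) mulr0n mulr0 addr0.
  by case: (M_off _ _ delta _ _ HQ Hv ab).
have rs : \sum_j K i j = delta 0 i + beta 0 i * p i 0.
  under eq_bigr => j _ do rewrite Kij.
  by rewrite big_split /= -mulr_sumr diag_row M_row mxE.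
have pos : 0 < delta 0 i + beta 0 i * p i 0.
  by apply: ltr_wpDl => //; apply: mulr_gt0.
have k1 : (K *m x) i 0 = 0 by rewrite Kx mxE.
have k3 : 0 <= \sum_j K i j by rewrite rs ltW.
have [s0 _] := kernel_max _ _ _ Hoff Hi k1 xi k3.
by move: pos; rewrite -rs s0 ltxx.
Qed.


Lemma compare (M : 'M[R]_n) (beta : 'rV[R]_n) (p q : 'cV[R]_n) :
  (forall a b, a != b -> M a b <= 0) -> (forall i, 0 < beta 0 i) ->
  vpos p -> vpos q ->
  (forall i, (M *m p) i 0 = beta 0 i * p i 0 * (1 - p i 0)) ->
  (forall i, (M *m q) i 0 = beta 0 i * q i 0 * (1 - q i 0)) ->
  forall j, p j 0 <= q j 0.
Proof.
move=> Hoff Hb Hp Hq Ep Eq j.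
have [i Hi] := argmax_ex (fun j => p j 0 / q j 0) j.
set t := p i 0 / q i 0 in Hi.
have Hi' : forall k, p k 0 <= t * q k 0.
  by move=> k; have := Hi k; rewrite /= ler_pdivrMr.
have qi := Hq i; have qj := Hq j; have bi := Hb i.
suff t1 : t <= 1.
  have := Hi' j; nra.
rewrite leNgt; apply/negP => t1.
have pit : p i 0 = t * q i 0 by rewrite /t divfK // gt_eqF.
have D : (M *m p) i 0 - t * (M *m q) i 0 = \sum_k M i k * (p k 0 - t * q k 0).
  rewrite !mxE mulr_sumr -sumrB; apply: eq_bigr => k _; ring.
have D0 : 0 <= \sum_k M i k * (p k 0 - t * q k 0).
  apply: sumr_ge0 => k _; case: (eqVneq k i) => [->|ki].
    by rewrite pit subrr mulr0.
  apply: mulr_le0; first by apply: Hoff; rewrite eq_sym.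
  by rewrite subr_le0.
rewrite Ep Eq pit in D.
have key : beta 0 i * (t * q i 0) * (1 - t * q i 0) - t * (beta 0 i * q i 0 * (1 - q i 0))
   = - (beta 0 i * t * (q i 0 * q i 0) * (t - 1)) by ring.
have pos : 0 < beta 0 i * t * (q i 0 * q i 0) * (t - 1).
  apply: mulr_gt0; last by lra.
  apply: mulr_gt0; last by apply: mulr_gt0.
  by apply: mulr_gt0 => //; lra.
lra.
Qed.

End Helpers.

Theorem proposition2 (R : realFieldType) (n : nat) (hn : (2 <= n)%N)
  (Q : 'M[R]_n) (v : 'cV[R]_n) (beta delta : 'rV[R]_n) (pstar : 'cV[R]_n) :
  generator_mx Q -> irreducible_mx Q ->
  vpos v -> Q^T *m v = 0 -> \sum_(i < n) v i 0 = 1 ->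
  (forall i, 0 < beta 0 i) ->
  (forall i, 0 <= delta 0 i) -> (exists i, 0 < delta 0 i) ->
  let A := invmx (Lstar Q v + diag_mx delta) *m diag_mx beta in
  vpos pstar -> Hmap A pstar = pstar ->
  forall p : 'cV[R]_n, vpos p -> Hmap A p = p -> p = pstar.
Proof.
move=> HQ Hirr Hv _ _ Hb Hd Hd1 A Hps Hfps p Hp Hfp.
pose M := Mmat _ _ Q v delta.
have AE : A = invmx M *m diag_mx beta by [].
have Mu : M \in unitmx by apply: M_unit.
have Hoff : forall a b, a != b -> M a b <= 0.
  by move=> a b ab; case: (M_off _ _ _ _ delta _ _ HQ Hv ab).
have Eq : forall r, vpos r -> Hmap A r = r ->
    forall i, (M *m r) i 0 = beta 0 i * r i 0 * (1 - r i 0).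
  move=> r Hr Hf i.
  pose N := 1%:M + A *m diag_mx r^T.
  have MN : M *m N = M + diag_mx beta *m diag_mx r^T.
    by rewrite /N mulmxDr mulmx1 mulmxA AE mulmxA mulmxV // mul1mx.
  have Nu : N \in unitmx.
    have := MBP_unit _ _ Q v delta beta r HQ Hv Hd Hb Hr.
    by rewrite -MN unitmx_mul => /andP [].
  have E1 := congr1 (mulmx N) Hf.
  rewrite /Hmap -/N mulKVmx // in E1.
  have E2 := congr1 (mulmx M) E1.
  have MV : M *m invmx (Lstar Q v + diag_mx delta) = 1%:M := mulmxV Mu.
  rewrite !mulmxA MN MV mul1mx in E2.
  move/matrixP/(_ i 0): E2.
  have addE : forall X Y : 'cV[R]_n, (X + Y) i 0 = X i 0 + Y i 0.
    by move=> X Y; rewrite mxE.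
  rewrite mulmxDl addE; set S := (M *m r) i 0.
  rewrite -mulmxA !mul_diag_mx !mxE => E.
  have -> : S = beta 0 i * r i 0 - beta 0 i * (r i 0 * r i 0) by rewrite E; ring.
  ring.
apply/matrixP => i j; rewrite ord1; apply: le_anti.
rewrite (compare _ _ _ _ _ _ Hoff Hb Hp Hps (Eq p Hp Hfp) (Eq pstar Hps Hfps)).
by rewrite (compare _ _ _ _ _ _ Hoff Hb Hps Hp (Eq pstar Hps Hfps) (Eq p Hp Hfp)).
Qed.
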